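(* Let $n \geq 1$ be an integer and $q$ an arbitrary prime power. Then $m(n,q) \geq \frac{q^n-1}{q-1}$; that is, there exist affine subspaces $A_1,\ldots,A_m$ and $B_1,\ldots,B_m$ of the $n$-dimensional affine space $W$ over $\mathbb{F}_q$, with $m = \frac{q^n-1}{q-1}$, such that $A_i \cap B_i = \emptyset$ for each $1 \leq i \leq m$ and $A_i \cap B_j \neq \emptyset$ whenever $1 \leq i < j \leq m$.
   Context: Let $W$ be the $n$-dimensional affine space over the finite field $\mathbb{F}_q$; an affine subspace is a translate $v+U$ of a linear subspace $U$ of $\mathbb{F}_q^n$. A pair of families of affine subspaces $(A_i,B_i)_{1\le i\le m}$ of $W$ is called cross-intersecting if $A_i \cap B_i = \emptyset$ for each $1 \le i \le m$ and $A_i \cap B_j \neq \emptyset$ whenever $1 \le i < j \le m$. $m(n,q)$ denotes the maximal size $m$ of a cross-intersecting pair of families of affine subspaces $(A_i,B_i)_{1 \le i \le m}$ of $W$. *)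

(* Defs.v *)
From HB Require Import structures.
From mathcomp Require Import all_boot all_order all_algebra all_field.
Set Implicit Arguments. Unset Strict Implicit. Unset Printing Implicit Defensive.
Import GRing.Theory.
Local Open Scope ring_scope.

(* The n-dimensional affine space over a finite field F is modelled by the
   vector space 'rV[F]_n; an affine subspace is a translate v + U of a
   linear subspace U : {vspace 'rV[F]_n}. *)
Definition affine_subspace (F : finFieldType) (n : nat)
    (A : {set 'rV[F]_n}) : Prop :=
  exists (v : 'rV[F]_n) (U : {vspace 'rV[F]_n}),
    A = [set x : 'rV[F]_n | (x - v) \in U].

Definition cross_intersecting (F : finFieldType) (n m : nat)
    (A B : 'I_m -> {set 'rV[F]_n}) : Prop :=
  [/\ forall i, affine_subspace (A i),
      forall i, affine_subspace (B i),
      forall i, A i :&: B i = set0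
    & forall i j : 'I_m, (i < j)%N -> A i :&: B j != set0].

(* Main.v *)
Require Import Defs.
From mathcomp Require Import all_boot all_order all_algebra all_field.
Set Implicit Arguments. Unset Strict Implicit. Unset Printing Implicit Defensive.
Import GRing.Theory.
Local Open Scope ring_scope.

Definition dotv (F : finFieldType) n (x w : 'rV[F]_n) : F := (x *m w^T) 0 0.

Definition inR (F : finFieldType) n (w : 'rV[F]_n) : bool :=
  [exists t, (w 0 t == 1) && [forall s : 'I_n, (t < s)%N ==> (w 0 s == 0)]].

Lemma dot_delta (F : finFieldType) n (s : 'I_n) (w : 'rV[F]_n) :
  dotv (delta_mx 0 s) w = w 0 s.
Proof.
rewrite /dotv !mxE (bigD1 s) //= big1 ?addr0.
  by rewrite !mxE !eqxx /= mul1r.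
by move=> j /negbTE ne; rewrite !mxE ne andbF mul0r.
Qed.

Lemma dotD (F : finFieldType) n (x y w : 'rV[F]_n) :
  dotv (x + y) w = dotv x w + dotv y w.
Proof. by rewrite /dotv mulmxDl mxE. Qed.

Lemma dotN (F : finFieldType) n (x y w : 'rV[F]_n) :
  dotv (x - y) w = dotv x w - dotv y w.
Proof. by rewrite /dotv mulmxBl !mxE. Qed.

Lemma dotZ (F : finFieldType) n (c : F) (x w : 'rV[F]_n) :
  dotv (c *: x) w = c * dotv x w.
Proof. by rewrite /dotv -scalemxAl mxE. Qed.

Lemma subE (F : finFieldType) m n (A B : 'M[F]_(m, n)) i j :
  (A - B) i j = A i j - B i j.
Proof. by rewrite !mxE. Qed.

Lemma aff_dot (F : finFieldType) n (w v : 'rV[F]_n) :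
  affine_subspace [set x | dotv x w == dotv v w].
Proof.
exists v, (lker (linfun (mulmxr (w^T) : 'rV[F]_n -> 'rV[F]_1))).
apply/setP => x; rewrite !inE memv_ker lfunE /=.
apply/eqP/eqP => H.
  by apply/matrixP => i j; rewrite !ord1 mulmxBl subE -/(dotv x w) -/(dotv v w) H subrr mxE.
have := congr1 (fun M : 'rV[F]_1 => M 0 0) H.
rewrite /= mulmxBl subE -/(dotv x w) -/(dotv v w) mxE => /eqP.
by rewrite subr_eq0 => /eqP.
Qed.

Lemma sep (F : finFieldType) n (r1 r2 : 'rV[F]_n) :
  inR r1 -> inR r2 -> r1 != r2 -> exists x, dotv x r1 = 0 /\ dotv x r2 = 1.
Proof.
move=> /existsP[t1 /andP[/eqP h1 /forallP z1]] /existsP[t2 /andP[/eqP h2 /forallP z2]] ne.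
case: (ltngtP t1 t2) => [lt|gt|eq].
- exists (delta_mx 0 t2); rewrite !dot_delta h2; split=> //.
  by apply/eqP; exact: (implyP (z1 t2) lt).
- exists (delta_mx 0 t2 - r1 0 t2 *: delta_mx 0 t1).
  rewrite !dotN !dotZ !dot_delta h1 h2 mulr1 subrr; split=> //.
  by rewrite (eqP (implyP (z2 t1) gt)) mulr0 subr0.
- have et : t1 = t2 by apply: val_inj.
  subst t2.
  have [s Hs] : exists s, r1 0 s != r2 0 s.
    apply/existsP; apply: contraR ne => /existsPn H.
    by apply/eqP/matrixP => i j; rewrite !ord1; apply/eqP; rewrite -[_ == _]negbK H.
  have hd : r2 0 s - r1 0 s != 0 by rewrite subr_eq0 eq_sym.
  exists ((r2 0 s - r1 0 s)^-1 *: (delta_mx 0 s - r1 0 s *: delta_mx 0 t1)).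
  rewrite !dotZ !dotN !dotZ !dot_delta h1 h2 mulr1 subrr mulr0; split=> //.
  by rewrite mulVf.
Qed.

Lemma inR_scale_inj (F : finFieldType) n (c c' : F) (r r' : 'rV[F]_n) :
  c != 0 -> c' != 0 -> inR r -> inR r' -> c *: r = c' *: r' -> c = c' /\ r = r'.
Proof.
move=> hc hc' /existsP[t /andP[/eqP h1 /forallP z1]] /existsP[t' /andP[/eqP h2 /forallP z2]] E.
have E2 : forall s, c * r 0 s = c' * r' 0 s.
  by move=> s; have := congr1 (fun M : 'rV[F]_n => M 0 s) E; rewrite !mxE.
have le1 : (t' <= t)%N.
  rewrite leqNgt; apply/negP => lt.
  have := E2 t'; rewrite h2 (eqP (implyP (z1 t') lt)) mulr0 mulr1 => /esym/eqP.
  by rewrite (negbTE hc').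
have le2 : (t <= t')%N.
  rewrite leqNgt; apply/negP => lt.
  have := E2 t; rewrite h1 (eqP (implyP (z2 t) lt)) mulr0 mulr1 => /eqP.
  by rewrite (negbTE hc).
have et : t = t' by apply: val_inj; apply/eqP; rewrite eqn_leq le1 le2.
subst t'.
have cc : c = c' by have := E2 t; rewrite h1 h2 !mulr1.
split=> //; subst c'.
by rewrite -(scalerK hc r) E scalerK.
Qed.

Lemma nz_decomp (F : finFieldType) n (w : 'rV[F]_n) :
  w != 0 -> exists c r, [/\ c != 0, inR r & w = c *: r].
Proof.
move=> nz.
have [i0 Hi0] : exists i, w 0 i != 0.
  apply/existsP; apply: contraR nz => /existsPn H.
  by apply/eqP/matrixP => i j; rewrite !ord1 mxE; apply/eqP; rewrite -[_ == _]negbK H.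
case: (@arg_maxnP _ i0 (fun i => w 0 i != 0) (fun i => nat_of_ord i) Hi0) => t Ht Hmax.
exists (w 0 t), ((w 0 t)^-1 *: w); split=> //.
  apply/existsP; exists t; rewrite mxE mulVf // eqxx /=.
  apply/forallP => s; apply/implyP => lt; rewrite mxE.
  case: (eqVneq (w 0 s) 0) => [->|ns]; first by rewrite mulr0.
  by have := Hmax s ns => /(leq_trans lt); rewrite ltnn.
by rewrite scalerA mulfV // scale1r.
Qed.

Lemma card_R (F : finFieldType) n :
  (#|[set w : 'rV[F]_n | inR w]| * #|F|.-1 = #|F| ^ n - 1)%N.
Proof.
pose S := setX [set c : F | c != 0] [set w : 'rV[F]_n | inR w].
have cS : #|S| = (#|F|.-1 * #|[set w : 'rV[F]_n | inR w]|)%N.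
  rewrite cardsX; congr (_ * _)%N.
  by rewrite -(cardsC1 (0 : F)); apply: eq_card => c; rewrite !inE.
have img : [set p.1 *: p.2 | p in S] = [set w : 'rV[F]_n | w != 0].
  apply/setP => w; rewrite inE; apply/imsetP/idP.
    move=> [[c r]]; rewrite !inE /= => /andP[hc hr] ->.
    move: hr => /existsP[t /andP[/eqP h _]].
    apply/negP => /eqP E; have := congr1 (fun M : 'rV[F]_n => M 0 t) E.
    by rewrite !mxE h mulr1 => /eqP; rewrite (negbTE hc).
  move=> /nz_decomp[c [r [hc hr ->]]]; exists (c, r) => //.
  by rewrite !inE hc hr.
have inj : {in S &, injective (fun p : F * 'rV[F]_n => p.1 *: p.2)}.
  move=> [c r] [c' r']; rewrite !inE /= => /andP[hc hr] /andP[hc' hr'] E.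
  by have [-> ->] := inR_scale_inj hc hc' hr hr' E.
rewrite mulnC; have := card_in_imset inj; rewrite img cS => <-.
have -> : #|[set w : 'rV[F]_n | w != 0]| = #|[set~ (0 : 'rV[F]_n)]| by apply: eq_card => w; rewrite !inE.
by rewrite cardsC1 card_mx mul1n subn1.
Qed.

Theorem proposition3p2 (F : finFieldType) (n : nat) (hn : (1 <= n)%N) :
  exists A B : 'I_((#|F| ^ n - 1) %/ (#|F| - 1)) -> {set 'rV[F]_n},
    cross_intersecting A B.
Proof.
have q1 : (0 < #|F| - 1)%N by rewrite subn_gt0 finNzRing_gt1.
rewrite -(card_R F n) subn1 mulnK; last by rewrite -subn1.
pose R := [set w : 'rV[F]_n | inR w].
pose A := fun i : 'I_#|R| => [set x | dotv x (enum_val i) == 0].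
pose B := fun i : 'I_#|R| => [set x | dotv x (enum_val i) == 1].
have hv : forall i : 'I_#|R|, exists v, dotv v (enum_val i) = 1.
  move=> i; have := enum_valP i; rewrite inE => /existsP[t /andP[/eqP h _]].
  by exists (delta_mx 0 t); rewrite dot_delta.
exists A, B; split.
- move=> i; rewrite /A.
  have -> : (0 : F) = dotv 0 (enum_val i) by rewrite /dotv mul0mx mxE.
  exact: aff_dot.
- move=> i; rewrite /B; have [v <-] := hv i; exact: aff_dot.
- move=> i; apply/setP => x; rewrite !inE.
  by case: eqP => //= ->; rewrite eq_sym oner_eq0.
- move=> i j lt; apply/set0Pn.
  have ne : enum_val i != enum_val j.
    by apply/negP => /eqP /enum_val_inj E; move: lt; rewrite E ltnn.
  have := enum_valP i; have := enum_valP j; rewrite !inE => hj hi.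
  have [x [h1 h2]] := sep hi hj ne.
  by exists x; rewrite !inE h1 h2 !eqxx.
Qed.
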